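(* Let $g=\theta\circ\lambda:\mathbf{S}^n\to[-\infty,\infty]$ be a spectral function with symmetric $\theta:\mathbb{R}^n\to[-\infty,\infty]$, and assume $\theta$ is locally Lipschitz continuous relative to its domain. Then for any $X\in\mathbf{S}^n$ with $g(X)$ finite and any $v\in\mathbb{R}^n$, $$\mathrm{d}\theta(\lambda(X))(v)=\mathrm{d}g\big(\mathrm{Diag}(\lambda(X))\big)(\mathrm{Diag}(v)).$$ In particular, if $C\subset\mathbf{S}^n$ is a spectral set with $C=\{X:\lambda(X)\in\Theta\}$ for a symmetric set $\Theta\subset\mathbb{R}^n$, then for every $X\in C$, $$T_\Theta(\lambda(X))=\{v\in\mathbb{R}^n:\ \mathrm{Diag}(v)\in T_C(\mathrm{Diag}(\lambda(X)))\}.$$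
   Context: $\mathbf{S}^n$: real symmetric $n\times n$ matrices with trace inner product and Frobenius norm. $\lambda(X)$: eigenvalues of $X$ in nonincreasing order; $\mathrm{Diag}(x)$: diagonal matrix with diagonal $x$. $\theta$ is symmetric if $\theta(Px)=\theta(x)$ for all permutation matrices $P$; a set $\Theta$ is symmetric if its indicator is symmetric; $g$ is spectral if $g(U^\top XU)=g(X)$ for all orthogonal $U$ (then $g=\theta\circ\lambda$ with $\theta(x)=g(\mathrm{Diag}(x))$); $C$ is a spectral set if its indicator is spectral. A function $f$ is locally Lipschitz continuous relative to a set $D\subset\mathrm{dom}\,f$ around $\bar x\in D$ ($f(\bar x)$ finite) if there exist $\ell\ge0$ and a neighborhood $V$ of $\bar x$ with $|f(x)-f(y)|\le\ell\|x-y\|$ for $x,y\in V\cap D$; it is locally Lipschitz continuous relative to its domain if this holds around every point of $\mathrm{dom}\,f$ with $D=\mathrm{dom}\,f$. Subderivative: $\mathrm{d}f(\bar x)(\bar w)=\liminf_{t\downarrow0,\,w\to\bar w}\frac{f(\bar x+tw)-f(\bar x)}{t}$. Tangent cone: $T_C(\bar x)=\{w:\exists t_k\downarrow0,\ w_k\to w,\ \bar x+t_kw_k\in C\}$. *)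

(* Defs.v *)
From HB Require Import structures.
From mathcomp Require Import all_boot all_order all_fingroup all_algebra.
From mathcomp Require Import all_classical all_reals all_analysis.
Set Implicit Arguments. Unset Strict Implicit. Unset Printing Implicit Defensive.
Import Order.TTheory GRing.Theory Num.Theory.
Import numFieldNormedType.Exports.
Local Open Scope classical_set_scope.
Local Open Scope ring_scope.

Section Spectral.
Variable R : realType.

Definition symmx (n : nat) : set 'M[R]_n := [set X | X^T = X].

Definition is_sorted_eigvals (n : nat) (X : 'M[R]_n) (x : 'rV[R]_n) : Prop :=
  (forall i j : 'I_n, (i <= j)%N -> x 0 j <= x 0 i) /\
  char_poly X = \prod_(i < n) ('X - (x 0 i)%:P).

(* lambda(X): the eigenvalues of X in nonincreasing order (well defined for
   X in S^n; an arbitrary value (0) otherwise). *)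
Definition lam (n : nat) (X : 'M[R]_n) : 'rV[R]_n :=
  xget 0 (is_sorted_eigvals X).

Definition enorm (n : nat) (x : 'rV[R]_n) : R :=
  Num.sqrt (\sum_(i < n) x 0 i ^+ 2).

Definition sym_fun (n : nat) (U : Type) (th : 'rV[R]_n -> U) : Prop :=
  forall (s : 'S_n) (x : 'rV[R]_n), th (col_perm s x) = th x.

Definition sym_set (n : nat) (Th : set 'rV[R]_n) : Prop :=
  sym_fun (fun x => `[< Th x >]).

Definition edom (V : Type) (f : V -> \bar R) : set V := [set x | (f x < +oo)%E].

Definition loc_lip_rel (n : nat) (f : 'rV[R]_n -> \bar R) (D : set 'rV[R]_n)
    (xb : 'rV[R]_n) : Prop :=
  f xb \is a fin_num /\
  exists l : R, 0 <= l /\ exists V : set 'rV[R]_n, nbhs xb V /\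
    forall x y, V x -> D x -> V y -> D y ->
      (`|f x - f y| <= (l * enorm (x - y))%:E)%E.

Definition loc_lip_dom (n : nat) (f : 'rV[R]_n -> \bar R) : Prop :=
  forall xb, edom f xb -> loc_lip_rel f (edom f) xb.

(* Subderivative, with directions w restricted to the ambient space S:
   df(xb)(wb) = liminf_{t \downarrow 0, w -> wb, w in S} (f(xb + t w) - f(xb)) / t,
   the liminf being written out as sup over neighbourhoods of inf. *)
Definition subderiv (V : normedModType R) (S : set V) (f : V -> \bar R)
    (xb wb : V) : \bar R :=
  ereal_sup [set y | exists d e : R, 0 < d /\ 0 < e /\
    y = ereal_inf [set z | exists (t : R) (w : V),
          0 < t < d /\ ball wb e w /\ S w /\
          z = ((f (xb + t *: w)%R - f xb) * (t^-1)%:E)%E]].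

Definition tcone (V : normedModType R) (C : set V) (xb : V) : set V :=
  [set w | exists (t : nat -> R) (ws : nat -> V),
     (forall k, 0 < t k) /\ t @ \oo --> 0 /\ ws @ \oo --> w /\
     (forall k, C (xb + t k *: ws k))].

End Spectral.

(* Main.v *)
Require Import Defs.
From HB Require Import structures.
From mathcomp Require Import all_boot all_order all_fingroup all_algebra.
From mathcomp Require Import all_classical all_reals all_analysis.
From mathcomp Require Import complex spectral.
From mathcomp Require Import ring lra.
Set Implicit Arguments. Unset Strict Implicit. Unset Printing Implicit Defensive.
Import Order.TTheory GRing.Theory Num.Theory.
Import numFieldNormedType.Exports.
Local Open Scope ring_scope.

Section Alg.
Variable R : rcfType.
Local Notation C := (R[i]).
Local Notation rC := (real_complex R).

Definition sev n (X : 'M[R]_n) (x : 'rV[R]_n) : Prop :=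
  (forall i j : 'I_n, (i <= j)%N -> x 0 j <= x 0 i) /\
  char_poly X = \prod_(i < n) ('X - (x 0 i)%:P).

Lemma char_poly_conj (F : fieldType) n (P A : 'M[F]_n) : P \in unitmx ->
  char_poly (invmx P *m A *m P) = char_poly A.
Proof.
move=> Pu; rewrite /char_poly /char_poly_mx.
set Q := map_mx (@polyC F) (invmx P).
set Pp := map_mx (@polyC F) P.
have QP : Q *m Pp = 1%:M by rewrite -map_mxM mulVmx // map_mx1.
have -> : 'X%:M - map_mx (@polyC F) (invmx P *m A *m P) =
   Q *m ('X%:M - map_mx (@polyC F) A) *m Pp.
  rewrite !map_mxM -/Q -/Pp mulmxBr mulmxBl scalar_mxC.
  by rewrite -(mulmxA _ Q Pp) QP mulmx1.
rewrite !det_mulmx mulrC mulrA [\det Pp * _]mulrC -det_mulmx QP det1 mul1r.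
by [].
Qed.
End Alg.
Section Alg2.
Variable R : rcfType.
Local Notation C := (R[i]).
Local Notation rC := (real_complex R).
Local Open Scope sesquilinear_scope.

Lemma real_spectral n (M : 'M[R]_n) : M^T = M ->
  exists P : 'M[C]_n, exists r : 'rV[R]_n, P \is unitarymx /\
    map_mx rC M = invmx P *m diag_mx (map_mx rC r) *m P.
Proof.
move=> MT.
have H : map_mx rC M \is hermsymmx.
  apply/is_hermitianmxP; rewrite expr0 scale1r; apply/matrixP => i j.
  by rewrite !mxE -[in LHS]MT mxE; symmetry; exact: conjc_real.
have /orthomx_spectralP Aeq := hermitian_normalmx H.
exists (spectralmx (map_mx rC M)), (map_mx (@complex.Re R) (spectral_diag (map_mx rC M))).
split; first exact: spectral_unitarymx.
suff -> : map_mx rC (map_mx (@complex.Re R) (spectral_diag (map_mx rC M))) =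
  spectral_diag (map_mx rC M) by [].
apply/matrixP => i j; rewrite !mxE RRe_real //.
by have /mxOverP := hermitian_spectral_diag_real H; apply.
Qed.

Lemma charpoly_real_spec n (M : 'M[R]_n) (P : 'M[C]_n) (r : 'rV[R]_n) :
  P \is unitarymx ->
  map_mx rC M = invmx P *m diag_mx (map_mx rC r) *m P ->
  char_poly M = \prod_(i < n) ('X - (r 0 i)%:P).
Proof.
move=> Pu Meq.
apply: (@map_poly_inj _ _ rC).
rewrite map_char_poly Meq char_poly_conj ?unitarymx_unit //.
rewrite char_poly_trig ?diag_mx_is_trig // rmorph_prod.
apply: eq_bigr => i _; rewrite !mxE eqxx mulr1n.
by rewrite /= map_polyXsubC.
Qed.
End Alg2.
Section Sev.
Variable R : rcfType.

Definition seqr n (x : 'rV[R]_n) := [seq x 0 i | i <- enum 'I_n].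

Lemma size_seqr n (x : 'rV[R]_n) : size (seqr x) = n.
Proof. by rewrite size_map size_enum_ord. Qed.

Lemma nth_seqr n (x : 'rV[R]_n) (i : 'I_n) : nth 0 (seqr x) i = x 0 i.
Proof. by rewrite (nth_map i) ?size_enum_ord // nth_ord_enum. Qed.

Lemma prod_seqr n (x : 'rV[R]_n) (F : R -> {poly R}) :
  \prod_(i < n) F (x 0 i) = \prod_(a <- seqr x) F a.
Proof. by rewrite big_map big_enum. Qed.

Lemma seqr_inj n (x y : 'rV[R]_n) : seqr x = seqr y -> x = y.
Proof.
move=> e; apply/rowP => i; rewrite -!nth_seqr; by rewrite e.
Qed.

Let geR := (fun a b : R => b <= a).
Lemma geR_trans : transitive geR.
Proof. by move=> b a c h1 h2; exact: le_trans h2 h1. Qed.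
Lemma geR_anti : antisymmetric geR.
Proof. by move=> a b /andP[h1 h2]; apply: le_anti; rewrite /geR in h1 h2; rewrite h1 h2. Qed.

Lemma sorted_seqr n (x : 'rV[R]_n) :
  (forall i j : 'I_n, (i <= j)%N -> x 0 j <= x 0 i) -> sorted geR (seqr x).
Proof.
move=> H; apply/(sortedP 0) => i; rewrite size_seqr => hi.
have hi' : (i < n)%N by apply: ltn_trans hi.
have := H (Ordinal hi') (Ordinal hi) (leqnSn _).
by rewrite -(nth_seqr x (Ordinal hi')) -(nth_seqr x (Ordinal hi)).
Qed.

Lemma sev_uniq n (M : 'M[R]_n) x y : sev M x -> sev M y -> x = y.
Proof.
move=> [sx cx] [sy cy]; apply: seqr_inj.
apply: (sorted_eq geR_trans geR_anti); try exact: sorted_seqr.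
apply: prod_XsubC_eq; by rewrite -!prod_seqr -cx -cy.
Qed.

Lemma sev_perm n (M : 'M[R]_n) x (z : 'rV[R]_n) : sev M x ->
  char_poly M = \prod_(i < n) ('X - (z 0 i)%:P) ->
  exists s : 'S_n, x = col_perm s z.
Proof.
move=> [_ cx] cz.
have hp : perm_eq (seqr x) [tuple z 0 i | i < n].
  apply: prod_XsubC_eq; rewrite -prod_seqr -cx cz.
  by rewrite big_tuple; apply: eq_bigr => i _; rewrite tnth_mktuple.
have [s hs] := tuple_permP hp.
exists s; apply/rowP => j.
have := congr1 (fun q => nth 0 q j) hs; rewrite nth_seqr /= => ->.
rewrite !mxE (nth_map j) ?size_enum_ord // nth_ord_enum tnth_mktuple.
by [].
Qed.

Lemma sev_exists n (M : 'M[R]_n) (r : 'rV[R]_n) :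
  char_poly M = \prod_(i < n) ('X - (r 0 i)%:P) -> exists x, sev M x.
Proof.
move=> cr.
set s := sort geR (seqr r).
have ss : sorted geR s by apply: sort_sorted => a b; exact: le_total.
have sz : size s = n by rewrite size_sort size_seqr.
exists (\row_i nth 0 s i); split.
  move=> i j hij; rewrite !mxE.
  apply: (sorted_leq_nth geR_trans) => //; first by move=> a; exact: lexx.
    by rewrite inE sz.
  by rewrite inE sz.
rewrite cr (prod_seqr r (fun a => 'X - a%:P)) -(perm_big _ (permEl (perm_sort geR _))) -/s.
rewrite (big_nth 0) sz big_mkord; apply: eq_bigr => i _; by rewrite mxE.
Qed.
End Sev.
Section Weyl.
Variable R : rcfType.
Local Notation C := (R[i]).
Local Notation rC := (real_complex R).
Local Open Scope sesquilinear_scope.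

Definition qf n (A : 'M[C]_n) (x : 'rV[C]_n) : C := (x *m A *m x^t*) 0 0.

Lemma qfE n (A : 'M[C]_n) x :
  qf A x = \sum_j (\sum_i x 0 i * A i j) * (x 0 j)^*.
Proof.
by rewrite /qf !mxE; apply: eq_bigr => j _; rewrite !mxE; congr (_ * _).
Qed.

Lemma qf1E n (x : 'rV[C]_n) : qf 1%:M x = \sum_i x 0 i * (x 0 i)^*.
Proof. by rewrite /qf mulmx1 !mxE; apply: eq_bigr => j _; rewrite !mxE. Qed.

Lemma qfD n (A B : 'M[C]_n) x : qf (A + B) x = qf A x + qf B x.
Proof. by rewrite /qf mulmxDr mulmxDl mxE. Qed.

Lemma qf_diag n (P : 'M[C]_n) (d : 'rV[C]_n) (b : 'rV[C]_n) :
  P \is unitarymx ->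
  qf (invmx P *m diag_mx d *m P) (b *m P) = \sum_i d 0 i * (b 0 i * (b 0 i)^*).
Proof.
move=> Pu; rewrite /qf invmx_unitary // trmx_mul map_mxM !mulmxA !mulmxtVK //.
rewrite mxE; apply: eq_bigr => j _; rewrite mul_mx_diag !mxE.
by rewrite mulrAC mulrC mulrA.
Qed.

Lemma qf1_unit n (P : 'M[C]_n) (b : 'rV[C]_n) :
  P \is unitarymx -> qf 1%:M (b *m P) = \sum_i b 0 i * (b 0 i)^*.
Proof.
move=> Pu; rewrite -qf1E /qf !mulmx1 trmx_mul map_mxM mulmxA mulmxtVK //.
Qed.

Lemma rowsub_unitary m n (f : 'I_m -> 'I_n) (P : 'M[C]_n) :
  injective f -> P \is unitarymx -> rowsub f P \is unitarymx.
Proof.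
move=> fi /unitarymxP Pu; apply/unitarymxP; apply/matrixP => i j.
have /matrixP/(_ (f i) (f j)) := Pu; rewrite !mxE /= (inj_eq fi) => <-.
apply: eq_bigr => k _; by rewrite !mxE.
Qed.

Lemma rowsub_supp m n (f : 'I_m -> 'I_n) (P : 'M[C]_n) (a : 'rV[C]_m) :
  a *m rowsub f P = (a *m rowsub f 1%:M) *m P /\
  forall i, (forall k, f k != i) -> (a *m rowsub f 1%:M) 0 i = 0.
Proof.
split; first by rewrite -mulmxA mul_rowsub_mx mul1mx.
move=> i hi; rewrite mxE big1 // => k _; rewrite !mxE.
by rewrite (negbTE (hi k)) mulr0.
Qed.

Lemma rC_real (a : R) : rC a \is Num.real.
Proof. by apply/CrealP; exact: conjc_real. Qed.

Lemma nz_entry n (b : 'rV[C]_n) : b != 0 -> exists j, b 0 j != 0.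
Proof.
move=> hb; case: (pickP (fun j => b 0 j != 0)) => [j hj | h]; first by exists j.
case/negP: hb; apply/eqP/rowP => i; have := h i; rewrite /= => /negbFE/eqP ->.
by rewrite !mxE.
Qed.

Lemma lowB n (P : 'M[C]_n) (r : 'rV[R]_n) (c : R) : P \is unitarymx ->
  exists U : 'M[C]_(#|[pred i | c < r 0 i]|, n),
   \rank U = #|[pred i | c < r 0 i]| /\
   forall a, a *m U != 0 -> rC c * qf 1%:M (a *m U) <
      qf (invmx P *m diag_mx (map_mx rC r) *m P) (a *m U).
Proof.
move=> Pu.
exists (rowsub (@enum_val _ [pred i | c < r 0 i]) P); split.
  exact/mxrank_unitary/rowsub_unitary/Pu/enum_val_inj.
move=> a; have [-> hs] := rowsub_supp (@enum_val _ [pred i | c < r 0 i]) P a.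
set b := a *m _ => nz.
have bS : forall i, ~~ (c < r 0 i) -> b 0 i = 0.
  move=> i hi; apply: hs => k; apply: contra hi => /eqP <-.
  by have := enum_valP k.
clearbody b; clear hs.
have rE : forall i, (map_mx rC r) 0 i = rC (r 0 i) by move=> i; rewrite mxE.
have bnz : b != 0 by apply: contra nz => /eqP ->; rewrite mul0mx.
have [j hj] := nz_entry bnz.
have jS : c < r 0 j by apply: contraR hj => /bS ->.
rewrite qf_diag // qf1_unit // mulr_sumr.
rewrite (bigD1 j) //= [X in _ < X](bigD1 j) //=.
apply: ltr_leD.
  rewrite rE ltr_pM2r ?ltcR // mul_conjC_gt0 //.
apply: ler_sum => i _; case: (boolP (c < r 0 i)) => hi.
  by rewrite rE ler_wpM2r ?mul_conjC_ge0 // lecR ltW.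
by rewrite bS // mul0r !mulr0.
Qed.

Lemma upA n (P : 'M[C]_n) (r : 'rV[R]_n) (c : R) m (U : 'M[C]_(m, n)) :
  P \is unitarymx ->
  (forall a, a *m U != 0 -> rC c * qf 1%:M (a *m U) <
      qf (invmx P *m diag_mx (map_mx rC r) *m P) (a *m U)) ->
  (\rank U <= #|[pred i | (c < r 0 i)%R]|)%N.
Proof.
move=> Pu HU.
set S := [pred i | c < r 0 i].
set V := rowsub (@enum_val _ [predC S]) P.
have rV : \rank V = #|[predC S]|.
  exact/mxrank_unitary/rowsub_unitary/Pu/enum_val_inj.
have rE : forall i, (map_mx rC r) 0 i = rC (r 0 i) by move=> i; rewrite mxE.
have cap0 : \rank (U :&: V)%MS = 0%N.
  apply/eqP; rewrite mxrank_eq0 -submx0; apply/rV_subP => x.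
  rewrite sub_capmx => /andP[/submxP[a ->] /submxP[a' e]].
  rewrite submx0; apply: contraT => nz.
  have h := HU a nz; rewrite e in h.
  have [e2 hs] := rowsub_supp (@enum_val _ [predC S]) P a'.
  rewrite e2 in h; set b := a' *m _ in h hs.
  have bS : forall i, c < r 0 i -> b 0 i = 0.
    move=> i hi; apply: hs => k; apply/eqP => ek.
    by have := enum_valP k; rewrite ek inE /= inE hi.
  clearbody b; clear hs.
  move: h; rewrite qf_diag // qf1_unit // mulr_sumr => h.
  suff hle : \sum_i (map_mx rC r) 0 i * (b 0 i * (b 0 i)^*) <=
      \sum_i rC c * (b 0 i * (b 0 i)^*).
    by have := lt_le_trans h hle; rewrite ltxx.
  apply: ler_sum => i _; case: (boolP (c < r 0 i)) => hi.
    by rewrite bS // mul0r !mulr0.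
  by rewrite rE ler_wpM2r ?mul_conjC_ge0 // lecR leNgt.
have h1 := mxrank_sum_cap U V; rewrite cap0 addn0 rV in h1.
have h2 : (\rank (U + V)%MS <= n)%N by apply: rank_leq_col.
have h3 := cardC S; rewrite card_ord in h3.
rewrite -(leq_add2r #|[predC S]|) -h1 h3 //.
Qed.

Lemma conj_rC (a : R) : (rC a)^* = rC a.
Proof. exact/CrealP/rC_real. Qed.

Lemma qf_real n (N : 'M[R]_n) x : N^T = N -> qf (map_mx rC N) x \is Num.real.
Proof.
move=> NT; apply/CrealP; rewrite qfE rmorph_sum /=.
transitivity (\sum_j \sum_i (x 0 i)^* * rC (N i j) * x 0 j).
  apply: eq_bigr => j _; rewrite rmorphM /= conjCK rmorph_sum /= big_distrl.
  by apply: eq_bigr => i _; rewrite !rmorphM /= mxE conj_rC.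
rewrite exchange_big /=; apply: eq_bigr => k _; rewrite big_distrl.
apply: eq_bigr => i _; rewrite mxE.
have -> : N k i = N i k by rewrite -[in LHS]NT mxE.
by rewrite /= [RHS]mulrC mulrA mulrAC.
Qed.

Lemma qf_bound n (E : 'M[R]_n) (e : R) x : (forall i j, `|E i j| <= e) ->
  `|qf (map_mx rC E) x| <= rC (2 * n%:R * e) * qf 1%:M x.
Proof.
move=> hE; rewrite qfE qf1E.
apply: le_trans (ler_norm_sum _ _ _) _.
apply: (@le_trans _ _ (\sum_j \sum_i rC e * (`|x 0 i|^+2 + `|x 0 j|^+2))).
  apply: ler_sum => j _; rewrite normrM norm_conjC.
  apply: le_trans (ler_wpM2r (normr_ge0 _) (ler_norm_sum _ _ _)) _.
  rewrite big_distrl; apply: ler_sum => i _ /=; rewrite normrM mxE.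
  have he : `|rC (E i j)| <= rC e.
    by rewrite real_ler_norml ?rC_real // -rmorphN !lecR -ler_norml.
  have e0 : 0 <= rC e := le_trans (normr_ge0 _) he.
  apply: (@le_trans _ _ (`|x 0 i| * rC e * `|x 0 j|)).
    by rewrite ler_wpM2r // ler_wpM2l.
  rewrite mulrAC mulrC ler_wpM2l //.
  case: (real_leP (normr_real (x 0 i)) (normr_real (x 0 j))) => h.
    apply: (@le_trans _ _ (`|x 0 j| ^+ 2)); last by rewrite lerDr exprn_ge0.
    by rewrite expr2 ler_wpM2r.
  apply: (@le_trans _ _ (`|x 0 i| ^+ 2)); last by rewrite lerDl exprn_ge0.
  by rewrite expr2 ler_wpM2l // ltW.
rewrite le_eqVlt; apply/orP; left; apply/eqP.
under eq_bigr do under eq_bigr do rewrite !normCK.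
under eq_bigr do rewrite -mulr_sumr big_split /= sumr_const card_ord.
rewrite -mulr_sumr big_split /= sumr_const card_ord sumrMnl.
set W := \sum_(i < n) _.
rewrite -mulr_natr rmorphM rmorphM /= mul1r !rmorph_nat.
ring.
Qed.
End Weyl.
Section Weyl2.
Variable R : rcfType.
Local Notation C := (R[i]).
Local Notation rC := (real_complex R).

Lemma card_perm_pred n (s : 'S_n) (p : pred 'I_n) :
  #|[pred i | p (s i)]| = #|p|.
Proof.
rewrite -!sum1_card [RHS](reindex_inj (@perm_inj _ s)) /=.
by apply: eq_bigl.
Qed.

Lemma widen_inj m n (h : (m <= n)%N) : injective (widen_ord h).
Proof. by move=> a b /(congr1 val) /= /val_inj. Qed.

Lemma sorted_cnt n (x : 'rV[R]_n) (c : R) (k : 'I_n) :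
  (forall i j : 'I_n, (i <= j)%N -> x 0 j <= x 0 i) ->
  (c < x 0 k) = (k < #|[pred i | (c < x 0 i)%R]|)%N.
Proof.
move=> hs; apply/idP/idP => h.
  have hk : (k.+1 <= n)%N := ltn_ord k.
  have sub : (widen_ord hk) @: [set: 'I_k.+1] \subset [pred i | c < x 0 i].
    apply/fintype.subsetP => _ /imsetP[i _ ->]; rewrite inE /=.
    by apply: lt_le_trans h _; apply: hs; rewrite /= -ltnS (ltn_ord i).
  have := subset_leq_card sub.
  by rewrite card_imset ?cardsT ?card_ord //; exact: widen_inj.
apply: contraLR h; rewrite -leNgt => hle; rewrite -leqNgt.
have hk : (k <= n)%N := ltnW (ltn_ord k).
have sub : [pred i | c < x 0 i] \subset (widen_ord hk) @: [set: 'I_k].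
  apply/fintype.subsetP => i; rewrite inE /= => hi.
  have hik : (i < k)%N.
    rewrite ltnNge; apply/negP => hki.
    by have := lt_le_trans hi (le_trans (hs _ _ hki) hle); rewrite ltxx.
  apply/imsetP; exists (Ordinal hik); first by rewrite inE.
  by apply: val_inj.
apply: leq_trans (subset_leq_card sub) _.
by rewrite card_imset ?cardsT ?card_ord //; exact: widen_inj.
Qed.

Lemma cnt_perm n (x r : 'rV[R]_n) (s : 'S_n) (c : R) : x = col_perm s r ->
  #|[pred i | (c < x 0 i)%R]| = #|[pred i | (c < r 0 i)%R]|.
Proof.
move=> ->; rewrite -(card_perm_pred s [pred i | (c < r 0 i)%R]).
by apply: eq_card => i; rewrite !inE mxE.
Qed.

Lemma weyl n (M E : 'M[R]_n) x y e : M^T = M -> E^T = E ->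
  (forall i j, `|E i j| <= e) -> sev M x -> sev (M + E) y ->
  forall k, x 0 k - 2 * n%:R * e <= y 0 k.
Proof.
move=> MT ET hE sx sy k.
have [P [r [Pu Meq]]] := real_spectral MT.
have MET : (M + E)^T = M + E by rewrite raddfD /= MT ET.
have [P' [r' [Pu' Meq']]] := real_spectral MET.
have [s hs] := sev_perm sx (charpoly_real_spec Pu Meq).
have [s' hs'] := sev_perm sy (charpoly_real_spec Pu' Meq').
set d := 2 * n%:R * e.
rewrite leNgt; apply/negP => hlt.
set c := (y 0 k + d + x 0 k) / 2.
have c1 : c < x 0 k by rewrite /c; lra.
have c2 : y 0 k < c - d by rewrite /c; lra.
have [U [rU hU]] := lowB r c Pu.
have cnt1 : (k < #|[pred i | (c < r 0 i)%R]|)%N.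
  by rewrite -(cnt_perm c hs) -sorted_cnt //; case: sx.
have hU' : forall a, a *m U != 0 -> rC (c - d) * qf 1%:M (a *m U) <
    qf (invmx P' *m diag_mx (map_mx rC r') *m P') (a *m U).
  move=> a nz; rewrite -Meq' map_mxD qfD Meq.
  have h1 := hU a nz.
  have h2 := qf_bound (a *m U) hE.
  have h3 := real_lerNnormlW (qf_real (a *m U) ET) h2.
  by rewrite rmorphB mulrBl; apply: ltr_leD h1 h3.
have := upA Pu' hU'; rewrite rU => cnt2.
have cnt3 : (k < #|[pred i | (c - d < y 0 i)%R]|)%N.
  by rewrite (cnt_perm _ hs'); apply: leq_trans cnt2.
move: cnt3; rewrite -sorted_cnt; last by case: sy.
by move=> h; have := lt_trans h c2; rewrite ltxx.
Qed.

Lemma weyl_abs n (M E : 'M[R]_n) x y e : M^T = M -> E^T = E ->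
  (forall i j, `|E i j| <= e) -> sev M x -> sev (M + E) y ->
  forall k, `|y 0 k - x 0 k| <= 2 * n%:R * e.
Proof.
move=> MT ET hE sx sy k.
have h1 := weyl MT ET hE sx sy k.
have MET : (M + E)^T = M + E by rewrite raddfD /= MT ET.
have NET : (- E)^T = - E by rewrite raddfN /= ET.
have hNE : forall i j, `|(- E) i j| <= e by move=> i j; rewrite mxE normrN.
have sx' : sev (M + E + - E) x by rewrite addrK.
have h2 := weyl MET NET hNE sy sx' k.
rewrite ler_distl; apply/andP; split; lra.
Qed.

Lemma sp_key n (z : 'rV[R]_n) (E : 'M[R]_n) y e : E^T = E ->
  (forall i j, `|E i j| <= e) -> sev (diag_mx z + E) y ->
  exists s : 'S_n, forall j, `|(col_perm s y) 0 j - z 0 j| <= 2 * n%:R * e.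
Proof.
move=> ET hE sy.
have cz : char_poly (diag_mx z) = \prod_(i < n) ('X - (z 0 i)%:P).
  rewrite char_poly_trig ?diag_mx_is_trig //.
  by apply: eq_bigr => i _; rewrite mxE eqxx mulr1n.
have [x sx] := sev_exists cz.
have [s hs] := sev_perm sx cz.
have DT : (diag_mx z)^T = diag_mx z by rewrite tr_diag_mx.
exists (s^-1)%g => j; rewrite mxE.
have := weyl_abs DT ET hE sx sy ((s^-1)%g j).
by rewrite hs mxE permKV.
Qed.

Lemma sev_sym n (M : 'M[R]_n) : M^T = M -> exists x, sev M x.
Proof.
move=> MT; have [P [r [Pu Meq]]] := real_spectral MT.
exact: sev_exists (charpoly_real_spec Pu Meq).
Qed.
End Weyl2.

Section Final.
Variable R : realType.
Local Open Scope classical_set_scope.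
Local Open Scope ring_scope.

Lemma mxballE n m (x y : 'M[R]_(n,m)) e :
  ball x e y <-> 0 < e /\ forall i j, `|x i j - y i j| < e.
Proof. by []. Qed.

Lemma entry_le n m (M : 'M[R]_(n,m)) i j : `|M i j| <= `|M|.
Proof.
by rewrite [leRHS]/Num.Def.normr /= mx_normrE; apply/bigmax_geP; right => /=; exists (i, j).
Qed.

Lemma lamP n (X : 'M[R]_n) : X^T = X -> sev X (lam X).
Proof. move=> XT; exact: (@xgetPex _ 0 (is_sorted_eigvals X) (sev_sym XT)). Qed.

Lemma lam_pert n (z : 'rV[R]_n) (E : 'M[R]_n) e : E^T = E ->
  (forall i j, `|E i j| <= e) ->
  exists s : 'S_n, forall j,
    `|(col_perm s (lam (diag_mx z + E))) 0 j - z 0 j| <= 2 * n%:R * e.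
Proof.
move=> ET hE; apply: (sp_key ET hE); apply: lamP.
by rewrite raddfD /= tr_diag_mx ET.
Qed.

Lemma lam_diag n (z : 'rV[R]_n) : exists s : 'S_n, col_perm s (lam (diag_mx z)) = z.
Proof.
have h0 : forall i j, `|(0 : 'M[R]_n) i j| <= 0 by move=> i j; rewrite mxE normr0.
have [s hs] := lam_pert z (trmx0 _ _ _) h0.
exists s; apply/rowP => j; have := hs j; rewrite addr0 mulr0 normr_le0 subr_eq0.
by move=> /eqP.
Qed.

Lemma th_diag n (U : Type) (th : 'rV[R]_n -> U) z :
  sym_fun th -> th (lam (diag_mx z)) = th z.
Proof. by move=> hs; have [s hs'] := lam_diag z; rewrite -[in RHS]hs' hs. Qed.

Lemma diagD n (a b : 'rV[R]_n) (t : R) :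
  diag_mx a + t *: diag_mx b = diag_mx (a + t *: b).
Proof.
apply/matrixP => i j; rewrite !mxE.
by case: (i == j); rewrite ?mulr1n ?mulr0n ?mulr0 ?addr0.
Qed.

Lemma ball_diag n (v w : 'rV[R]_n) e :
  ball (diag_mx v) e (diag_mx w) <-> ball v e w.
Proof.
rewrite !mxballE; split => -[e0 h]; split => // i j.
  by have := h j j; rewrite !mxE eqxx !mulr1n (ord1 i).
rewrite !mxE; case: eqP => [->|_]; rewrite ?mulr1n ?mulr0n; first exact: h.
by rewrite subr0 normr0.
Qed.
End Final.

Section Part1.
Variable R : realType.
Local Open Scope classical_set_scope.
Local Open Scope ring_scope.

Lemma part1 n (theta : 'rV[R]_n -> \bar R) : sym_fun theta ->
  forall l v : 'rV[R]_n,
  subderiv setT theta l v =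
  subderiv (@symmx R n) (fun Y => theta (lam Y)) (diag_mx l) (diag_mx v).
Proof.
move=> hsym l v.
have fD : forall z, theta (lam (diag_mx z)) = theta z by move=> z; exact: th_diag.
rewrite /subderiv; apply/le_anti/andP; split.
- apply: ge_ereal_sup => _ [d [e [d0 [e0 ->]]]].
  have hn : 0 <= n%:R :> R := ler0n _ _.
  set K : R := 2 * n%:R + 1.
  have K0 : 0 < K by rewrite /K; lra.
  set e1 := e / K.
  have e10 : 0 < e1 by rewrite /e1 divr_gt0.
  apply: le_ereal_sup_tmp; eexists.
    by exists d, e1; split; [exact: d0 | split; [exact: e10 | reflexivity]].
  apply: ereal_inf_le_tmp => _ [t [W [td [bW [sW ->]]]]].
  move: bW => /mxballE [_ bW].
  set E := t *: (W - diag_mx v).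
  have t0 : 0 < t by case/andP: td.
  have ET : E^T = E.
    by rewrite /E linearZ /= raddfB /= tr_diag_mx sW.
  have hE : forall i j, `|E i j| <= t * e1.
    move=> i j; rewrite /E !mxE normrM gtr0_norm // ler_pM2l // distrC.
    by apply: ltW; have := bW i j; rewrite !mxE.
  have [s hs] := lam_pert (l + t *: v) ET hE.
  set y := lam (diag_mx (l + t *: v) + E) in hs.
  have dec : diag_mx l + t *: W = diag_mx (l + t *: v) + E.
    by rewrite -diagD /E scalerBr addrCA addrK addrC.
  exists t, (t^-1 *: (col_perm s y - l)); split => //; split.
    apply/mxballE; split => // i j; rewrite (ord1 i).
    have -> : v 0 j - (t^-1 *: (col_perm s y - l)) 0 j =
        t^-1 * ((l + t *: v) 0 j - (col_perm s y) 0 j).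
      by rewrite !mxE; field; exact: lt0r_neq0.
    have := hs j; set a := (col_perm s y) 0 j => ha.
    rewrite normrM gtr0_norm ?invr_gt0 // distrC.
    apply: (@le_lt_trans _ _ (t^-1 * (2 * n%:R * (t * e1)))).
      by rewrite ler_pM2l ?invr_gt0.
    have -> : t^-1 * (2 * n%:R * (t * e1)) = 2 * n%:R * e1.
      field; exact: lt0r_neq0.
    have -> : e = K * e1 by rewrite /e1 mulrC divfK // lt0r_neq0.
    by rewrite ltr_pM2r // /K; lra.
  split => //.
  have -> : l + t *: (t^-1 *: (col_perm s y - l)) = col_perm s y.
    by rewrite scalerA mulfV ?lt0r_neq0 // scale1r addrC subrK.
  by rewrite hsym dec fD.
- apply: ge_ereal_sup => _ [d [e [d0 [e0 ->]]]].
  apply: le_ereal_sup_tmp; eexists.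
    by exists d, e; split; [exact: d0 | split; [exact: e0 | reflexivity]].
  apply: ereal_inf_le_tmp => _ [t [w [td [bw [_ ->]]]]].
  exists t, (diag_mx w); split => //; split; first by apply/ball_diag.
  split; first by rewrite /symmx /= tr_diag_mx.
  by rewrite diagD !fD.
Qed.
End Part1.

Section Part2.
Variable R : realType.
Local Open Scope classical_set_scope.
Local Open Scope ring_scope.

Lemma Th_sym n (Th : set 'rV[R]_n) : sym_set Th ->
  forall (s : 'S_n) x, Th (col_perm s x) <-> Th x.
Proof.
move=> hs s x; have := hs s x; split => h.
  by apply/asboolP; rewrite -H; apply/asboolP.
by apply/asboolP; rewrite H; apply/asboolP.
Qed.

Lemma Th_diag n (Th : set 'rV[R]_n) : sym_set Th ->
  forall z, Th (lam (diag_mx z)) <-> Th z.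
Proof.
move=> hs z; have := th_diag z hs; split => h.
  by apply/asboolP; rewrite -H; apply/asboolP.
by apply/asboolP; rewrite H; apply/asboolP.
Qed.

Lemma part2 n (Th : set 'rV[R]_n) : sym_set Th -> forall l : 'rV[R]_n,
  tcone Th l = [set v | tcone [set Y : 'M[R]_n | symmx Y /\ Th (lam Y)]
                          (diag_mx l) (diag_mx v)].
Proof.
move=> hsym l; apply/seteqP; split => v /=.
  move=> [t [ws [t0 [tc [wc hT]]]]].
  exists t, (fun k => diag_mx (ws k)); split => //; split => //; split.
    apply/cvg_ballP => eps eps0; have h := (cvg_ballP _ _).1 wc eps eps0.
    near=> k.
    apply/ball_diag.
    near: k.
    exact: h.
  move=> k; rewrite diagD; split; first by rewrite /symmx /= tr_diag_mx.
  by apply/(Th_diag hsym).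
move=> [t [Ws [t0 [tc [Wc hC]]]]].
have hn : 0 <= n%:R :> R := ler0n _ _.
have WT : forall k, (Ws k)^T = Ws k.
  move=> k; have := (hC k).1; rewrite /symmx /= raddfD /= tr_diag_mx linearZ /=.
  by move/addrI => h; apply: (scalerI (lt0r_neq0 (t0 k))) h.
pose E k := t k *: (Ws k - diag_mx v).
have ET : forall k, (E k)^T = E k.
  by move=> k; rewrite /E linearZ /= raddfB /= tr_diag_mx WT.
have hE : forall k i j, `|E k i j| <= t k * `|Ws k - diag_mx v|.
  move=> k i j; rewrite /E !mxE normrM gtr0_norm // ler_pM2l //.
  by have := entry_le (Ws k - diag_mx v) i j; rewrite !mxE.
have hex : forall k, exists s : 'S_n, forall j,
    `|(col_perm s (lam (diag_mx (l + t k *: v) + E k))) 0 j - (l + t k *: v) 0 j|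
      <= 2 * n%:R * (t k * `|Ws k - diag_mx v|).
  by move=> k; exact: lam_pert (ET k) (hE k).
have [sf hsf] := choice hex.
pose y k := lam (diag_mx (l + t k *: v) + E k).
pose u k := (t k)^-1 *: (col_perm (sf k) (y k) - l).
have dec : forall k, diag_mx l + t k *: Ws k = diag_mx (l + t k *: v) + E k.
  by move=> k; rewrite -diagD /E scalerBr addrCA addrK addrC.
exists t, u; split => //; split => //; split.
  apply/cvg_ballP => eps eps0.
  set K : R := 2 * n%:R + 1.
  have K0 : 0 < K by rewrite /K; lra.
  have h := (cvgrPdist_lt _ _).1 Wc (eps / K) (divr_gt0 eps0 K0).
  suff hk_ok : forall k, `|diag_mx v - Ws k| < eps / K -> ball v eps (u k).
    near=> k.
    apply: hk_ok.
    near: k.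
    exact: h.
  move=> k hk; apply/mxballE; split => // i j; rewrite (ord1 i).
  have tk0 := t0 k.
  have -> : v 0 j - (u k) 0 j =
      (t k)^-1 * ((l + t k *: v) 0 j - (col_perm (sf k) (y k)) 0 j).
    by rewrite /u !mxE; field; exact: lt0r_neq0.
  have := hsf k j; rewrite -/(y k); set a := (col_perm (sf k) (y k)) 0 j => ha.
  rewrite normrM gtr0_norm ?invr_gt0 // distrC.
  apply: (@le_lt_trans _ _ ((t k)^-1 * (2 * n%:R * (t k * `|Ws k - diag_mx v|)))).
    by rewrite ler_pM2l ?invr_gt0.
  have -> : (t k)^-1 * (2 * n%:R * (t k * `|Ws k - diag_mx v|)) =
      2 * n%:R * `|Ws k - diag_mx v| by field; exact: lt0r_neq0.
  rewrite distrC in hk.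
  have -> : eps = K * (eps / K) by rewrite mulrC divfK // lt0r_neq0.
  have hw : 0 <= `|Ws k - diag_mx v| := normr_ge0 _.
  rewrite /K; set w := `|Ws k - diag_mx v| in hk hw *; set q := eps / (2 * n%:R + 1) in hk *.
  nra.
move=> k.
have -> : l + t k *: u k = col_perm (sf k) (y k).
  by rewrite /u scalerA mulfV ?lt0r_neq0 // scale1r addrC subrK.
apply/(Th_sym hsym); rewrite /y -dec; exact: (hC k).2.
Unshelve. all: by end_near.
Qed.
End Part2.

Local Open Scope classical_set_scope.
Local Open Scope ring_scope.

Theorem proposition3p2 (R : realType) (n : nat) :
  (forall theta : 'rV[R]_n -> \bar R,
     sym_fun theta -> loc_lip_dom theta ->
     forall X : 'M[R]_n, symmx X -> theta (lam X) \is a fin_num ->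
     forall v : 'rV[R]_n,
       subderiv setT theta (lam X) v =
       subderiv (@symmx R n) (fun Y => theta (lam Y))
                (diag_mx (lam X)) (diag_mx v))
  /\
  (forall Theta : set 'rV[R]_n, sym_set Theta ->
     let C := [set Y : 'M[R]_n | symmx Y /\ Theta (lam Y)] in
     forall X : 'M[R]_n, C X ->
       tcone Theta (lam X) = [set v | tcone C (diag_mx (lam X)) (diag_mx v)]).
Proof.
split.
  move=> theta hs _ X _ _ v; exact: part1.
move=> Th hs C X _; exact: part2.
Qed.
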